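(* For every integer $k\ge 1$, let $\mathcal{F}^2(k)=\gcd\{\sum_{i=1}^k F_{n+i}^2 : n \ge 0\}$. Then $$\mathcal{F}^2(k) = \begin{cases} F_k, & \text{if $k$ is even},\\ 2, & \text{if $k \equiv 3 \pmod{6}$},\\ 1, & \text{if $k \equiv 1,5 \pmod{6}$}.\end{cases}$$
   Context: $(F_n)$ is the Fibonacci sequence: $F_0=0$, $F_1=1$, $F_n=F_{n-1}+F_{n-2}$. *)

(* Defs.v *)
From mathcomp Require Import all_boot.

Fixpoint fib (n : nat) : nat :=
  match n with
  | 0 => 0
  | S m => match m with
           | 0 => 1
           | S p => fib m + fib p
           end
  end.

Definition fibsq_sum (k n : nat) : nat := \sum_(1 <= i < k.+1) (fib (n + i)) ^ 2.

Definition is_gcd_seq (u : nat -> nat) (g : nat) : Prop :=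
  (forall n, g %| u n) /\ (forall d, (forall n, d %| u n) -> d %| g).

(* Main.v *)
Require Import Defs.
From mathcomp Require Import all_boot.
From mathcomp Require Import zify.

Lemma fibSS n : fib n.+2 = fib n.+1 + fib n.
Proof. by []. Qed.

Lemma fib_sum_id k n :
  fibsq_sum k n + fib n * fib n.+1 = fib (n + k) * fib (n + k).+1.
Proof.
elim: k => [|k IH].
  by rewrite /fibsq_sum big_geq // addn0.
rewrite /fibsq_sum big_nat_recr // -/(fibsq_sum k n).
have -> : (n + k.+1) = (n + k).+1 by lia.
rewrite [fib (n + k).+2]fibSS.
move: IH; set a := fib (n + k); set b := fib (n + k).+1; set s := fibsq_sum k n.
set c := fib n * fib n.+1. rewrite expnS expn1 => h; change (s + b * b + c = b * (b + a)); nia.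
Qed.

Lemma fib_add m n : fib (m + n).+1 = fib m.+1 * fib n.+1 + fib m * fib n.
Proof.
elim: m n => [|m IH] n.
  by rewrite add0n; change (fib n.+1 = 1 * fib n.+1 + 0 * fib n); lia.
have -> : (m.+1 + n).+1 = (m + n.+1).+1 by lia.
rewrite IH fibSS [fib m.+2]fibSS. nia.
Qed.

Lemma cassini j :
  if odd j then fib j.+2 * fib j = fib j.+1 ^ 2 + 1
  else fib j.+2 * fib j + 1 = fib j.+1 ^ 2.
Proof.
elim: j => [|j IH]; first by [].
have e3 : fib j.+3 = fib j.+2 + fib j.+1 by [].
have e2 : fib j.+2 = fib j.+1 + fib j by [].
rewrite e2 in IH. rewrite [odd _]/= e3 e2.
case: (odd j) IH => /= IH; nia.
Qed.

Lemma fib_odd k : odd (fib k) = (k %% 3 != 0).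
Proof.
elim: k {-2}k (leqnn k) => [|m IH] k hk.
  by have -> : k = 0 by lia.
case: k hk => [|[|[|k]]] hk //.
have -> : fib k.+3 = 2 * fib k.+1 + fib k by rewrite !fibSS; lia.
rewrite oddD oddM /= IH; last by lia.
congr (~~ _); apply/eqP/eqP; lia.
Qed.

Lemma fib_coprime k : coprime (fib k) (fib k.+1).
Proof.
elim: k => [|k IH] //.
by rewrite /coprime fibSS gcdnDl -/(coprime _ _) coprime_sym.
Qed.

Lemma main_id j n :
  let A := fib j in let B := fib j.+1 in
  let x := fib n in let y := fib n.+1 in let z := fib n.+2 in
  fibsq_sum j.+1 n + A * B * x * y + (if odd j then 0 else 2 * x * y) =
  B * (y * z * B + A * y * y + A * x * z + B * x * y).
Proof.
move=> A B x y z.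
have h1 := fib_sum_id j.+1 n.
have h2 : fib (n + j.+1) = B * y + A * x.
  by rewrite addnC fib_add.
have h3 : fib (n + j.+1).+1 = B * z + A * y.
  have -> : (n + j.+1).+1 = (j + n.+1).+1 by lia.
  by rewrite fib_add.
rewrite h2 h3 in h1.
have hc := cassini j. rewrite fibSS -/A -/B in hc.
have hz : z = y + x by [].
rewrite hz in h1 *.
case: (odd j) hc => hc.
  have := congr1 (fun t => t * x * y) hc. simpl. nia.
have := congr1 (fun t => t * x * y) hc. simpl. nia.
Qed.

Lemma main_id' j n c : c = (if odd j then 0 else 2) ->
  fibsq_sum j.+1 n + fib j * fib j.+1 * fib n * fib n.+1 + c * fib n * fib n.+1 =
  fib j.+1 * (fib n.+1 * fib n.+2 * fib j.+1 + fib j * fib n.+1 * fib n.+1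
     + fib j * fib n * fib n.+2 + fib j.+1 * fib n * fib n.+1).
Proof.
move=> ->; have := main_id j n; cbv zeta; case: (odd j) => <-; lia.
Qed.

Theorem theorem5p2 (k : nat) (hk : 1 <= k) :
  is_gcd_seq (fibsq_sum k)
    (if ~~ odd k then fib k
     else if k %% 6 == 3 then 2
     else 1).
Proof.
case: k hk => // j _.
have hS0 : fibsq_sum j.+1 0 = fib j.+1 * fib j.+2.
  by have := fib_sum_id j.+1 0; rewrite add0n; change (fib 0 * fib 1) with 0; lia.
have hS1 : fibsq_sum j.+1 1 + 1 = fib j.+2 * fib j.+3.
  by have := fib_sum_id j.+1 1; rewrite add1n; change (fib 1 * fib 2) with 1.
have e2 : fib j.+2 = fib j.+1 + fib j by [].
have e3 : fib j.+3 = fib j.+2 + fib j.+1 by [].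
rewrite oddS negbK.
case hj: (odd j).
-
  split.
  + move=> n; have := main_id' j n 0; rewrite hj => /(_ erefl) H.
    have : fib j.+1 %| fibsq_sum j.+1 n + fib j * fib j.+1 * fib n * fib n.+1
      + 0 * fib n * fib n.+1 by rewrite H dvdn_mulr.
    rewrite mul0n addn0 dvdn_addl //.
    by apply: dvdn_mulr; apply: dvdn_mulr; apply: dvdn_mull.
  + move=> d hd.
    have H := main_id' j 1 0; rewrite hj in H; have {}H := H erefl.
    change (fib 1) with 1 in H; change (fib 2) with 1 in H; change (fib 3) with 2 in H.
    have h1 : fibsq_sum j.+1 1 = fib j.+1 * (2 * fib j.+2 + fib j.+1).
      rewrite e2; nia.
    have : d %| gcdn (fib j.+1 * fib j.+2) (fib j.+1 * (2 * fib j.+2 + fib j.+1)).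
      by rewrite dvdn_gcd -hS0 -h1 !hd.
    rewrite -muln_gcdr gcdnMDl.
    have := fib_coprime j.+1; rewrite coprime_sym /coprime => /eqP ->.
    by rewrite muln1.
-
  have hd : forall d, (forall n, d %| fibsq_sum j.+1 n) -> d %| 2 /\ d %| fib j.+1.
    move=> d hd.
    have hcop : coprime d (fib j.+2).
      rewrite /coprime -dvdn1.
      have g1 : gcdn d (fib j.+2) %| fibsq_sum j.+1 1
        by apply: dvdn_trans (dvdn_gcdl _ _) (hd 1).
      have g2 : gcdn d (fib j.+2) %| fibsq_sum j.+1 1 + 1
        by rewrite hS1; apply: dvdn_mulr; apply: dvdn_gcdr.
      by rewrite -(dvdn_addr _ g1).
    have hB : d %| fib j.+1 by rewrite -(Gauss_dvdl _ hcop) -hS0 hd.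
    split => //.
    have H := main_id' j 1 2; rewrite hj in H; have {}H := H erefl.
    change (fib 1) with 1 in H; change (fib 2) with 1 in H; change (fib 3) with 2 in H.
    have : d %| fibsq_sum j.+1 1 + fib j * fib j.+1 * 1 * 1 + 2 * 1 * 1
      by rewrite H dvdn_mulr.
    rewrite -addnA dvdn_addr ?hd // dvdn_addr //.
    by rewrite !muln1 dvdn_mull.
  have hk2 : (j.+1) %% 2 = 1 by rewrite modn2 oddS hj.
  case: ifP => h6.
  + split; last by move=> d /hd [].
    move=> n.
    have H := main_id' j n 2; rewrite hj in H; have {}H := H erefl.
    have hB : 2 %| fib j.+1.
      by rewrite dvdn2 fib_odd negbK; apply/eqP; move/eqP: h6; lia.
    have : 2 %| fibsq_sum j.+1 n + fib j * fib j.+1 * fib n * fib n.+1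
      + 2 * fib n * fib n.+1 by rewrite H dvdn_mulr.
    rewrite -addnA dvdn_addl //.
    apply: dvdn_add.
      by apply: dvdn_mulr; apply: dvdn_mulr; apply: dvdn_mull.
    by apply: dvdn_mulr; apply: dvdn_mulr.
  + split => // d /hd [h2 hB].
    have : d %| gcdn 2 (fib j.+1) by rewrite dvdn_gcd h2.
    have := coprime2n (fib j.+1); rewrite fib_odd /coprime.
    have -> : (j.+1 %% 3 != 0) = true by apply/eqP; move/eqP: h6; lia.
    by move/eqP ->.
Qed.
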